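(* Let $n>s\ge1$ be integers, $t_0,\dots,t_s$ independent indeterminates, $g(x)=\sum_{k=0}^st_kx^k$, $B=(b_{ij})_{1\le i,j\le s}=M_s(g,g')$, and let $\bar B=(\bar b_{ij})_{1\le i,j\le s}$ with $$\bar b_{ij}=b_{ij}-\frac{(s-i+1)(s-j+1)}{n}\,t_{s-i+1}t_{s-j+1}.$$ Write the characteristic polynomial of $\bar B$ as $\det(xI_s-\bar B)=\sum_{k=0}^sh_{s-k}(t_0,\dots,t_s)x^{s-k}$. Then for every $k$ with $1\le k\le s$, $h_{s-k}(t_0,\dots,t_s)$ is a nonzero polynomial in $\mathbb{R}[t_0,\dots,t_s]$.
   Context: Bezoutian: for polynomials $f_1,f_2$ over a field $F$ of characteristic $0$ and an integer $n\ge\max\{\deg f_1,\deg f_2\}$, write $\frac{f_1(x)f_2(y)-f_1(y)f_2(x)}{x-y}=\sum_{i,j=1}^n\alpha_{ij}x^{n-i}y^{n-j}\in F[x,y]$ and set $M_n(f_1,f_2)=(\alpha_{ij})_{1\le i,j\le n}$; here $F=\mathbb{R}(t_0,\dots,t_s)$. *)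

(* Defs.v *)
From HB Require Import structures.
From mathcomp Require Import all_boot all_order all_algebra.
Set Implicit Arguments. Unset Strict Implicit. Unset Printing Implicit Defensive.
Import Order.TTheory GRing.Theory Num.Theory.
Local Open Scope ring_scope.

(* mpoly R m : the polynomial ring R[t_0,...,t_(m-1)], built as iterated
   univariate polynomial rings: R[t_0][t_1]...[t_(m-1)]. *)
Fixpoint mpoly (R : idomainType) (m : nat) : idomainType :=
  match m with
  | 0 => R
  | m'.+1 => ({poly mpoly R m'} : idomainType)
  end.

(* the indeterminate t_k in R[t_0,...,t_(m-1)] (meaningful for k < m) *)
Fixpoint tvar (R : idomainType) (m k : nat) : mpoly R m :=
  match m return mpoly R m with
  | 0 => 0
  | m'.+1 => if k == m' then ('X : {poly mpoly R m'})
             else ((tvar R m' k)%:P : {poly mpoly R m'})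
  end.

Fixpoint mcst (R : idomainType) (m : nat) (c : R) : mpoly R m :=
  match m return mpoly R m with
  | 0 => c
  | m'.+1 => ((mcst m' c)%:P : {poly mpoly R m'})
  end.

(* Bezoutian M_n(f1,f2): with x the outer and y the inner variable of
   {poly {poly A}},  (f1(x) f2(y) - f1(y) f2(x)) / (x - y)
     = sum_{i,j=1}^n alpha_ij x^(n-i) y^(n-j),   M_n(f1,f2) = (alpha_ij).
   Here 0-indexed: entry (i,j) is the coefficient of x^(n-1-i) y^(n-1-j). *)
Definition bezoutian (A : idomainType) (n : nat) (f1 f2 : {poly A}) : 'M[A]_n :=
  let num : {poly {poly A}} := f1 ^:P * f2%:P - f1%:P * f2 ^:P in
  let Q := num %/ ('X - ('X)%:P) in
  \matrix_(i < n, j < n) (Q`_(n - i.+1))`_(n - j.+1).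

Definition gpoly (R : idomainType) (s : nat) : {poly mpoly R s.+1} :=
  \poly_(k < s.+1) tvar R s.+1 k.

(* Bbar, 0-indexed: row i corresponds to the paper's i+1, so
   (s - (i+1) + 1) = s - i. *)
Definition Bbar (R : fieldType) (n s : nat) : 'M[mpoly R s.+1]_s :=
  let B := bezoutian s (gpoly R s) (gpoly R s)^`() in
  \matrix_(i < s, j < s)
    (B i j - mcst s.+1 (((s - i) * (s - j))%:R / n%:R : R)
             * tvar R s.+1 (s - i) * tvar R s.+1 (s - j)).

(* Main.v *)
Require Import Defs.
From HB Require Import structures.
From mathcomp Require Import all_boot all_order all_algebra.
From mathcomp Require Import zify ring lra.
Import Order.TTheory GRing.Theory Num.Theory.
Local Open Scope ring_scope.



Fixpoint ev (R : idomainType) (f : nat -> R) (m : nat) : {rmorphism mpoly R m -> R} :=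
  match m return {rmorphism mpoly R m -> R} with
  | 0 => (idfun : {rmorphism R -> R})
  | m'.+1 => let g := ev R f m' in
     (horner_morph (fun a => mulrC (f m') (g a)) : {rmorphism {poly mpoly R m'} -> R})
  end.
Arguments ev {R} f m.

Lemma ev_tvar (R : idomainType) (f : nat -> R) m k : (k < m)%N -> ev f m (tvar R m k) = f k.
Proof.
elim: m => [//|m IH] /=.
rewrite ltnS leq_eqVlt => /orP [/eqP ->|]; first by rewrite eqxx horner_morphX.
move=> km; rewrite (ltn_eqF km) horner_morphC; exact: IH.
Qed.

Lemma ev_mcst (R : idomainType) (f : nat -> R) m c : ev f m (mcst m c) = c.
Proof. by elim: m => [//|m IH] /=; rewrite horner_morphC IH. Qed.


Lemma bez_map (A B : idomainType) (phi : {rmorphism A -> B}) (n : nat)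
  (f1 f2 : {poly A}) (Q' : {poly {poly B}}) :
  Q' * ('X - ('X)%:P) = (map_poly phi f1) ^:P * (map_poly phi f2)%:P
                        - (map_poly phi f1)%:P * (map_poly phi f2) ^:P ->
  forall i j, phi (bezoutian n f1 f2 i j) = (Q'`_(n - i.+1))`_(n - j.+1).
Proof.
move=> HQ i j; rewrite mxE.
set num := (_ - _ : {poly {poly A}}).
have : root num 'X.
  by rewrite /root /num !hornerE -!/(comp_poly _ _) !comp_polyXr subrr.
case/factor_theorem => q Hq.
rewrite Hq Pdiv.IdomainMonic.mulpK ?monicXsubC //.
have Hm : map_poly (map_poly phi) q = Q'.
  apply: (@mulIf _ ('X - ('X)%:P)); first by rewrite polyXsubC_eq0.
  rewrite HQ.
  have HD : map_poly (map_poly phi) ('X - ('X)%:P) = 'X - ('X)%:P.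
    by rewrite rmorphB /= map_polyX map_polyC /= map_polyX.
  rewrite -HD -rmorphM /= -Hq /num rmorphB /= !rmorphM /= !map_polyC /=.
  congr (_ * _ - _ * _); rewrite -!map_poly_comp; apply: eq_map_poly => x /=;
  by rewrite map_polyC.
by rewrite -Hm !coef_map.
Qed.


Lemma ring_aux (T : comNzRingType) (x y a b : T) n :
  (a * b) *+ n * (x - y) - (a - b) *+ n = (x * a + 1) * (b *+ n) - (y * b + 1) * (a *+ n).
Proof. ring. Qed.

Section S.
Variable R : realFieldType.

Lemma coef2_XY k l a b : ((('X^k * ('X^l)%:P : {poly {poly R}}))`_a)`_b = ((a == k) && (b == l))%:R.
Proof.
rewrite coefMC coefXn; case: (a == k) => /=; last by rewrite mul0r coef0.
by rewrite mul1r coefXn.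
Qed.

Lemma sum_ind m b (F : nat -> R) : \sum_(i < m) (((i : nat) == b)%:R * F i) = if (b < m)%N then F b else 0.
Proof.
rewrite -(@big_ord1_eq R 0 +%R F b m) [RHS]big_mkcond /=.
apply: eq_bigr => i _.
by case: (_ == _); rewrite ?mul1r ?mul0r.
Qed.

Definition Qp (m : nat) : {poly {poly R}} :=
  ('X^m * ('X^m)%:P) *+ m.+1 - (\sum_(i < m) 'X^(m.-1 - i) * ('X^i)%:P) *+ m.+1.

Lemma Qp_coef m a b : ((Qp m)`_a)`_b =
  (((a == m) && (b == m))%:R - ((b < m)%N && (a == m.-1 - b)%N)%:R) *+ m.+1.
Proof.
rewrite /Qp coefB coefMn coefB coefMn coefMn coefMn coef_sum coef_sum coef2_XY.
rewrite mulrnBl; congr (_ - _ *+ _).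
under eq_bigr => i _ do rewrite coef2_XY andbC -mulnb natrM (eq_sym b).
rewrite (sum_ind m b (fun i => (a == (m.-1 - i)%N)%:R)); by case: (b < m)%N.
Qed.

Lemma Qp_eq m : Qp m * ('X - ('X)%:P) =
  ('X^(m.+1) + 1 : {poly R})^:P * ('X^m *+ m.+1)%:P - ('X^(m.+1) + 1)%:P * ('X^m *+ m.+1)^:P.
Proof.
rewrite /Qp !rmorphD !rmorph1 !rmorphMn /= !map_polyXn !rmorphXn /=.
under eq_bigr => i _ do rewrite rmorphXn.
set x := ('X : {poly {poly R}}); set y := (('X : {poly R})%:P : {poly {poly R}}).
set S := \sum_(i < m) _.
have HS : S * (x - y) = x ^+ m - y ^+ m by rewrite subrXX mulrC.
rewrite mulrBl (mulrnAl S) HS.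
rewrite !exprS.
exact: ring_aux.
Qed.
End S.


Definition fsp (R : realFieldType) (s : nat) (k : nat) : R := (k == 0)%:R + (k == s)%:R.

Definition Mx (R : realFieldType) (n s : nat) : 'M[R]_s :=
  \matrix_(i < s, j < s) ((((i : nat) == 0%N) && ((j : nat) == 0%N))%:R * (s%:R - (s * s)%:R / n%:R)
                          + ((i + j)%N == s)%:R * - s%:R).

Lemma map_gpoly (R : realFieldType) m :
  map_poly (ev (fsp R m.+1) m.+2) (gpoly R m.+1) = 'X^(m.+1) + 1.
Proof.
apply/polyP => i; rewrite coef_map coef_poly coefD coefXn coef1.
case: ltnP => Hi.
  by transitivity (fsp R m.+1 i); [exact: ev_tvar | rewrite /fsp addrC].
transitivity (0 : R); first exact: rmorph0.
have /negbTE -> : i != m.+1 by rewrite neq_ltn Hi orbT.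
have /negbTE -> : i != 0%N by rewrite -lt0n (leq_trans _ Hi).
by rewrite addr0.
Qed.

Lemma map_gderiv (R : realFieldType) m :
  map_poly (ev (fsp R m.+1) m.+2) (gpoly R m.+1)^`() = 'X^m *+ m.+1.
Proof.
by rewrite -deriv_map map_gpoly derivD derivXn derivC addr0.
Qed.

Lemma map_Bbar (R : realFieldType) n m :
  map_mx (ev (fsp R m.+1) m.+2) (Bbar R n m.+1) = Mx R n m.+1.
Proof.
apply/matrixP => i j; rewrite [RHS]mxE mxE /Bbar mxE.
set phi := ev (fsp R m.+1) m.+2.
have HQ := Qp_eq R m.
rewrite -map_gpoly -map_gderiv in HQ.
have Hb := @bez_map _ _ phi m.+1 _ _ _ HQ i j.
rewrite Qp_coef in Hb.
have E0 c : phi (mcst m.+2 c) = c by exact: ev_mcst.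
have Et k : (k < m.+2)%N -> phi (tvar R m.+2 k) = fsp R m.+1 k by move=> hk; exact: ev_tvar.
have hi := ltn_ord i; have hj := ltn_ord j.
rewrite rmorphB !rmorphM Hb E0 !Et ?ltnS ?leq_subr // /fsp.
have -> : ((m.+1 - i.+1)%N == m) = ((i:nat) == 0%N) by lia.
have -> : ((m.+1 - j.+1)%N == m) = ((j:nat) == 0%N) by lia.
have -> : ((m.+1 - j.+1 < m)%N && ((m.+1 - i.+1)%N == (m.-1 - (m.+1 - j.+1))%N)) = ((i + j)%N == m.+1) by lia.
have -> : ((m.+1 - i)%N == 0%N) = false by lia.
have -> : ((m.+1 - j)%N == 0%N) = false by lia.
have -> : ((m.+1 - i)%N == m.+1) = ((i:nat) == 0%N) by lia.
have -> : ((m.+1 - j)%N == m.+1) = ((j:nat) == 0%N) by lia.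
rewrite !add0r.
have [i0|i0] := eqVneq (i : nat) 0%N; have [j0|j0] := eqVneq (j : nat) 0%N.
- have -> : ((i + j)%N == m.+1) = false by lia.

  rewrite i0 j0 !subn0 /= !mulr1 !mul0r !addr0 natrM; ring.
all: rewrite ?andbF /= !mulr0 mul0r subr0 add0r; set x := (_ == m.+1)%:R.
all: by rewrite mulrN mulr_natr ?mul0r sub0r ?mulNrn.
Qed.


Lemma char_poly_sim (R : comNzRingType) s (A B U : 'M[R]_s) :
  U *m A = B *m U -> \det U = 1 -> char_poly A = char_poly B.
Proof.
move=> HU dU.
have E : map_mx polyC U *m char_poly_mx A = char_poly_mx B *m map_mx polyC U.
  rewrite /char_poly_mx mulmxBr mulmxBl -!map_mxM HU scalar_mxC.
  by [].
have := congr1 determinant E.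
rewrite !det_mulmx det_map_mx dU rmorph1 mul1r mulr1.
by [].
Qed.

Section Sim.
Variables (R : realFieldType) (s : nat) (d a : R).

Definition lam (i : nat) : R := if i == 0%N then d else if (2 * i <= s)%N then a else - a.
Definition Mf (i j : nat) : R := ((i == 0%N) && (j == 0%N))%:R * d + ((i + j)%N == s)%:R * a.
Definition Uf (i k : nat) : R := (i == k)%:R + ((k == s - i)%N && (2 * i < s)%N)%:R.
Definition Lf (i k : nat) : R := (i == k)%:R * lam i + ((k == s - i)%N && (s < 2 * i)%N)%:R * a.

Definition MG : 'M[R]_s := \matrix_(i < s, j < s) Mf i j.
Definition UG : 'M[R]_s := \matrix_(i < s, j < s) Uf i j.
Definition LG : 'M[R]_s := \matrix_(i < s, j < s) Lf i j.

Ltac decb := repeat match goal with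
 | |- context [ nat_of_bool ?b ] =>
     (rewrite (_ : b = true); last by lia) || (rewrite (_ : b = false); last by lia)
 | |- context [ if ?b then _ else _ ] =>
     (rewrite (_ : b = true); last by lia) || (rewrite (_ : b = false); last by lia)
 end.

Lemma UM_LU : UG *m MG = LG *m UG.
Proof.
apply/matrixP => i j; rewrite !mxE.
have hi := ltn_ord i; have hj := ltn_ord j.
under eq_bigr => k _ do rewrite !mxE /Uf mulrDl -mulnb natrM -mulrA (eq_sym (nat_of_ord i)).
under [RHS]eq_bigr => k _ do rewrite !mxE /Lf mulrDl -mulnb natrM -!mulrA (eq_sym (nat_of_ord i)).
rewrite !big_split /=.
rewrite (sum_ind R s i (fun k => Mf k j)) (sum_ind R s (s - i)%N (fun k => ((2 * i)%N < s)%N%:R * Mf k j)).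
rewrite (sum_ind R s i (fun k => lam i * Uf k j)) (sum_ind R s (s - i)%N (fun k => (s < (2 * i)%N)%N%:R * (a * Uf k j))).
rewrite hi /Mf /Uf /lam.
case: (ltngtP (2 * i) s) => Hi; (have [ej|ej] := eqVneq (j:nat) i);
  (have [ej2|ej2] := eqVneq (i + j)%N s); (have [i0|i0] := eqVneq (i:nat) 0%N);
  (have [j0|j0]:= eqVneq (j:nat) 0%N);
  first [exfalso; lia | decb; rewrite /=; ring].
Qed.

Lemma det_UG : \det UG = 1.
Proof.
rewrite -det_tr det_trig.
  rewrite big1 // => i _; rewrite !mxE /Uf eqxx.
  have hi := ltn_ord i.
  by rewrite (_ : (_ && _) = false) ?addr0 //; lia.
apply/is_trig_mxP => i j Hij; rewrite !mxE /Uf.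
have hi := ltn_ord i; have hj := ltn_ord j.
rewrite (_ : (j == i :> nat) = false); last by lia.
by rewrite (_ : (_ && _) = false) ?addr0 //; lia.
Qed.

Lemma char_MG : char_poly MG = \prod_(i < s) ('X - (lam i)%:P).
Proof.
rewrite (@char_poly_sim _ _ _ _ _ UM_LU det_UG) char_poly_trig.
  apply: eq_bigr => i _; rewrite mxE /Lf eqxx mul1r.
  have hi := ltn_ord i.
  by rewrite (_ : (_ && _) = false) ?mul0r ?addr0 //; lia.
apply/is_trig_mxP => i j Hij; rewrite !mxE /Lf.
have hi := ltn_ord i; have hj := ltn_ord j.
rewrite (_ : (i == j :> nat) = false); last by lia.
by rewrite (_ : (_ && _) = false) ?mul0r ?addr0 //; lia.
Qed.
End Sim.


Section Pair.
Variables (T : comNzRingType) (c1 c2 : T).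
Definition Qm (s m : nat) : T := \prod_(i < m) (if (2 * i.+1 <= s)%N then c1 else c2).

Lemma Qm_pair k : Qm k.*2.+1 k.*2 = (c1 * c2) ^+ k /\ Qm k.*2.+2 k.*2.+1 = (c1 * c2) ^+ k * c1.
Proof.
elim: k => [|k [IH1 IH2]].
  by rewrite /Qm big_ord0 big_ord1 /= expr0 mul1r.
rewrite /Qm !doubleS; split.
- rewrite big_ord_recl big_ord_recr /=.
  have B x : bump 0 x = x.+1 by [].
  rewrite B (_ : (2 * (k.*2.+1).+1 <= k.*2.+3)%N = false); last by lia.
  have -> : \prod_(i < k.*2) (if (2 * (bump 0 i).+1 <= k.*2.+3)%N then c1 else c2) = Qm k.*2.+1 k.*2.
    apply: eq_bigr => i _ /=; rewrite B.
    by rewrite (_ : (2 * (i.+1).+1 <= k.*2.+3)%N = (2 * i.+1 <= k.*2.+1)%N); last by lia.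
  rewrite IH1 exprS; ring.
- rewrite big_ord_recl big_ord_recr /=.
  have B x : bump 0 x = x.+1 by [].
  rewrite B (_ : (2 * (k.*2.+2).+1 <= k.*2.+4)%N = false); last by lia.
  have -> : \prod_(i < k.*2.+1) (if (2 * (bump 0 i).+1 <= k.*2.+4)%N then c1 else c2) = Qm k.*2.+2 k.*2.+1.
    apply: eq_bigr => i _ /=; rewrite B.
    by rewrite (_ : (2 * (i.+1).+1 <= k.*2.+4)%N = (2 * i.+1 <= k.*2.+2)%N); last by lia.
  rewrite IH2 exprS; ring.
Qed.
End Pair.

Section Sign.
Variables (R : realFieldType) (c : R).
Hypothesis c0 : 0 < c.

Lemma coefX2 (p : {poly R}) i : (('X^2 - c%:P) * p)`_i = (if (i < 2)%N then 0 else p`_(i - 2)) - c * p`_i.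
Proof. by rewrite mulrBl coefB coefXnM coefCM. Qed.

Lemma hsign k : let h := ('X^2 - c%:P) ^+ k in
  [/\ forall i, h`_(i.*2.+1) = 0,
      forall j, (j <= k)%N -> 0 < (-1) ^+ (k - j) * h`_(j.*2)
    & forall j, (k < j)%N -> h`_(j.*2) = 0].
Proof.
elim: k => [|k [H1 H2 H3]] /=.
  split.
  - by move=> i; rewrite expr0 coef1.
  - by move=> j; rewrite leqn0 => /eqP ->; rewrite expr0 coef1 /= mulr1 ltr01.
  - by move=> j hj; rewrite expr0 coef1; case: j hj.
rewrite exprS; split.
- move=> i; rewrite coefX2 H1 mulr0 subr0.
  case: i => [|i] //=.
  by rewrite (_ : (i.+1.*2.+1 - 2 = i.*2.+1)%N) ?H1 //; lia.
- move=> j hj; rewrite coefX2.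
  case: j hj => [|j] hj /=.
    rewrite sub0r subn0 exprS mulN1r mulrN mulNr opprK.
    by rewrite mulrCA; apply: mulr_gt0 => //; have := H2 0%N (leq0n _); rewrite subn0.
  rewrite (_ : (j.+1.*2 - 2 = j.*2)%N); last by lia.
  rewrite mulrBr subSS.
  have P1 : 0 < (-1) ^+ (k - j) * (('X^2 - c%:P) ^+ k)`_j.*2 by apply: H2.
  case: (ltngtP j k) => Hj.
  + have P2 : 0 < (-1) ^+ (k - j.+1) * (('X^2 - c%:P) ^+ k)`_(j.+1).*2 by apply: H2.
    have E : (-1) ^+ (k - j) = - (-1) ^+ (k - j.+1) :> R.
      by rewrite (_ : (k-j = (k-j.+1).+1)%N) ?exprS ?mulN1r //; lia.
    have P3 := mulr_gt0 c0 P2.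
    rewrite [in X in _ - X]E mulNr opprK mulrCA.
    by apply: addr_gt0.
  + by exfalso; lia.
  + rewrite (H3 j.+1); last by lia.
    by rewrite mulr0 mulr0 subr0.
- move=> j hj; rewrite coefX2.
  case: j hj => [|j] hj //=.
  rewrite (_ : (j.+1.*2 - 2 = j.*2)%N); last by lia.
  by rewrite H3 1?H3 ?mulr0 ?subr0 //; lia.
Qed.
End Sign.


Lemma nz_of_pos (R : realFieldType) (x y : R) : 0 < x * y -> y != 0.
Proof. by apply: contraTneq => ->; rewrite mulr0 ltxx. Qed.

Lemma odd_coef (R : realFieldType) (c d : R) k i : 0 < c -> d != 0 -> (i <= k.*2)%N ->
  (('X - d%:P) * ('X^2 - c%:P) ^+ k)`_i != 0.
Proof.
move=> c0 d0 hi.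
have [H1 H2 H3] := @hsign R c c0 k.
rewrite mulrBl coefB coefXM coefCM.
move: hi; rewrite -(odd_double_half i); case: (odd i); move: (i./2) => j /= hi.
- rewrite add0n add1n H1 mulr0 subr0.
  apply: (@nz_of_pos _ ((-1) ^+ (k - j))); apply: H2; lia.
- rewrite add0n.
  case: j hi => [|j] hi /=.
    rewrite sub0r oppr_eq0 mulf_neq0 //.
    by apply: (@nz_of_pos _ ((-1) ^+ (k - 0))); apply: H2.
  rewrite H1 sub0r oppr_eq0 mulf_neq0 //.
  apply: (@nz_of_pos _ ((-1) ^+ (k - j.+1))); apply: H2; lia.
Qed.

Lemma ring_aux2 (T : comNzRingType) (x a d : T) h :
  (x - d) * (h * (x - a)) = x * (x * h) - (a + d) * (x * h) + (a * d) * h.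
Proof. ring. Qed.

Lemma even_coef (R : realFieldType) (a d : R) k i : a < 0 -> 0 < d -> a + d != 0 ->
  (i <= k.*2.+1)%N ->
  (('X - d%:P) * (('X^2 - (a * a)%:P) ^+ k * ('X - a%:P)))`_i != 0.
Proof.
move=> a0 d0 ad0 hi.
have c0 : 0 < a * a by rewrite nmulr_rgt0.
have [H1 H2 H3] := @hsign R (a * a) c0 k.
rewrite ring_aux2 -!polyCD -!polyCM coefD coefB !coefXM !coefCM !coefXM.
move: hi; rewrite -(odd_double_half i); case: (odd i); move: (i./2) => j /= hi.
- rewrite add0n add1n /= H1 mulr0 addr0.
  have -> : (if j.*2 == 0%N then 0 else (('X^2 - (a * a)%:P) ^+ k)`_j.*2.-1) = 0.
    by case: j {hi} => [|j] //=; rewrite (_ : (j.+1.*2.-1 = j.*2.+1)%N) ?H1 //; lia.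
  rewrite sub0r oppr_eq0 mulf_neq0 //.
  apply: (@nz_of_pos _ ((-1) ^+ (k - j))); apply: H2; lia.
- rewrite add0n.
  case: j hi => [|j] hi /=.
    rewrite mulr0 subr0 add0r; apply: mulf_neq0; first exact: mulf_neq0 (ltr0_neq0 a0) (lt0r_neq0 d0).
    by apply: (@nz_of_pos _ ((-1) ^+ (k - 0))); apply: H2.
  rewrite H1 mulr0 subr0.
  set A := _`_j.*2; set B := _`_j.+1.*2.
  have P0 : 0 < (-1) ^+ (k - j) * A by apply: H2; lia.
  have P1 : 0 < (-1) ^+ (k - j.+1) * B by apply: H2; lia.
  have E : (-1) ^+ (k - j) = - (-1) ^+ (k - j.+1) :> R.
    by rewrite (_ : (k-j = (k-j.+1).+1)%N) ?exprS ?mulN1r //; lia.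
  rewrite E in P0; move: P0 P1; set u := (-1) ^+ (k - j.+1) => P0 P1.
  have ad : 0 < - (a * d) by rewrite oppr_gt0 nmulr_rlt0.
  apply: (@nz_of_pos _ (- u)).
  have -> : - u * (A + a * d * B) = (- u * A) + (- (a * d)) * (u * B) by ring.
  by apply: addr_gt0 => //; apply: mulr_gt0.
Qed.


Lemma ring_aux3 (T : comNzRingType) (x y : T) : (x - y) * (x - - y) = x ^+ 2 - y * y.
Proof. ring. Qed.

Theorem lemma5p3 (R : realFieldType) (n s : nat) :
  (1 <= s)%N -> (s < n)%N ->
  forall k : nat, (1 <= k <= s)%N ->
    (char_poly (Bbar R n s))`_(s - k) != 0.
Proof.
case: s => [//|m] _ hn k hk.
set phi := ev (fsp R m.+1) m.+2.
set d : R := m.+1%:R - (m.+1 * m.+1)%:R / n%:R.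
set a : R := - m.+1%:R.
have n0 : (0 < n)%N by lia.
have d0 : 0 < d.
  rewrite /d subr_gt0 ltr_pdivrMr ?ltr0n // -natrM ltr_nat; nia.
have a0 : a < 0 by rewrite /a oppr_lt0 ltr0n.
have ad0 : a + d != 0.
  rewrite /a /d addrA addNr add0r oppr_eq0 mulf_neq0 // ?invr_eq0 pnatr_eq0; lia.
have HM : Mx R n m.+1 = MG R m.+1 d a by apply/matrixP => i j; rewrite !mxE.
apply: contra_neq (_ : (char_poly (Mx R n m.+1))`_(m.+1 - k) != 0) => [H|].
  by rewrite -map_Bbar -map_char_poly coef_map /= H rmorph0.
rewrite HM char_MG big_ord_recl.
rewrite [lam _ _ _ _ _]/lam eqxx.
have -> : \prod_(i < m) ('X - (lam R m.+1 d a (lift ord0 i))%:P) = Qm _ ('X - a%:P) ('X - (-a)%:P) m.+1 m.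
  by apply: eq_bigr => i _; rewrite /lam /=; case: ifP.
have c0 : 0 < a * a by rewrite nmulr_rgt0.
have sqpoly : ('X - a%:P) * ('X - (-a)%:P) = 'X^2 - (a * a)%:P.
  rewrite (polyCN a) polyCM; exact: ring_aux3.
move: hk; rewrite -(odd_double_half m); case: (odd m); move: (m./2) => j /= hk.
- have [_ ->] := @Qm_pair _ ('X - a%:P) ('X - (-a)%:P) j.
  rewrite sqpoly.
  apply: even_coef => //; lia.
- have [-> _] := @Qm_pair _ ('X - a%:P) ('X - (-a)%:P) j.
  rewrite sqpoly.
  apply: odd_coef => //; first exact: lt0r_neq0.
  lia.
Qed.
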